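(* Let $r\ge1$ and $\alpha,\beta,\gamma^1,\dots,\gamma^r\in\mathrm{ord}$. 1. If $\alpha\le\beta$ and $\beta<\alpha,\gamma^1,\dots,\gamma^r$, then $\beta<\gamma^1,\dots,\gamma^r$. 2. If $\beta<\alpha$ and $\alpha\le\beta,\gamma^1,\dots,\gamma^r$, then $\alpha\le\gamma^1,\dots,\gamma^r$.
   Context: Work constructively. Let $\mathfrak F$ be a set of index sets containing $\mathbb N$ and each $\mathbb N_k=\{n\in\mathbb N:n<k\}$ ($k\ge0$), closed (up to isomorphism) under finitely enumerated subsets, sets of finitely enumerated subsets, and disjoint unions indexed by elements of $\mathfrak F$. A finitely enumerated subset of $A$ is one given by a map $\mathbb N_k\to A$; write $F\subseteq_f I$. The set $\mathrm{ord}$ is inductively generated by $\underline 0$ and, for every family $(\alpha_i)_{i\in I}$ with $I\in\mathfrak F$, $\alpha_i\in\mathrm{ord}$, an element $\mathrm S(\alpha_i)_{i\in I}$; for such $\alpha$, $I_\alpha=I$ and $\alpha_i$ are its definitional subordinals; $I_{\underline 0}=\emptyset$. For a finite list $F$ in $I_\alpha$, $\alpha_F$ is the list of the $\alpha_i$, $i\in F$. Relations between an element and a nonempty finite list, by simultaneous induction: $\alpha\le\beta^1,\dots,\beta^m$ means $\alpha_i<\beta^1,\dots,\beta^m$ for all $i\in I_\alpha$; $\alpha<\beta^1,\dots,\beta^m$ means there exist $F_1\subseteq_f I_{\beta^1},\dots,F_m\subseteq_f I_{\beta^m}$, not all empty, with $\alpha\le\beta^1_{F_1},\dots,\beta^m_{F_m}$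 (concatenated list); $\alpha\le\beta$, $\alpha<\beta$ are the case $m=1$. *)

(* Defs.v *)
From Stdlib Require Import List.
Import ListNotations.
Set Implicit Arguments.

Definition Iso (A B : Type) : Prop :=
  exists (f : A -> B) (g : B -> A),
    (forall a, g (f a) = a) /\ (forall b, f (g b) = b).

Definition Nk (k : nat) : Type := {n : nat | n < k}.

(* A family of index sets 𝔉, given as codes [code] with decoding [El],
   together with the closure properties of the paper (up to isomorphism). *)
Record IndexFamily := {
  code : Type;
  El : code -> Type;
  has_nat : exists c, Iso (El c) nat;
  has_Nk : forall k, exists c, Iso (El c) (Nk k);
  (* every finitely enumerated subset F ⊆_f I (the image of a map N_k -> I)
     is (up to iso) in the family *)
  clos_fsub : forall c k (f : Nk k -> El c),
      exists c', Iso (El c') {x : El c | exists j, f j = x};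
  (* the set of finitely enumerated subsets of I (maps N_k -> I) *)
  clos_fsubs : forall c, exists c', Iso (El c') {k : nat & Nk k -> El c};
  clos_sigma : forall c (d : El c -> code),
      exists c', Iso (El c') {i : El c & El (d i)}
}.

Section Ord.
Variable F : IndexFamily.

Inductive ord : Type :=
| ozero : ord
| oS : forall c : code F, (El F c -> ord) -> ord.

Definition idx (a : ord) : Type :=
  match a with ozero => Empty_set | oS c _ => El F c end.

Definition sub (a : ord) : idx a -> ord :=
  match a return idx a -> ord with
  | ozero => fun e => match e with end
  | oS _ f => f
  end.

(* A choice of finitely enumerated subsets F_1 ⊆_f I_{b^1}, ..., F_m ⊆_f I_{b^m};
   a finitely enumerated subset N_k -> I is represented by a list of length k. *)
Fixpoint sel (L : list ord) : Type :=
  match L with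
  | [] => unit
  | b :: L' => (list (idx b) * sel L')%type
  end.

Fixpoint pick (L : list ord) : sel L -> list ord :=
  match L return sel L -> list ord with
  | [] => fun _ => []
  | b :: L' => fun p => map (sub b) (fst p) ++ pick L' (snd p)
  end.

Fixpoint sel_ne (L : list ord) : sel L -> Prop :=
  match L return sel L -> Prop with
  | [] => fun _ => False
  | b :: L' => fun p => fst p <> [] \/ sel_ne L' (snd p)
  end.

(* alpha <= b^1,...,b^m  :<->  for all i in I_alpha, alpha_i < b^1,...,b^m,
   where gamma < b^1..b^m :<-> exists F_j ⊆_f I_{b^j}, not all empty,
   with gamma <= b^1_{F_1},...,b^m_{F_m}.  (Simultaneous recursion, unfolded.) *)
Fixpoint ole (a : ord) (L : list ord) : Prop :=
  match a with
  | ozero => True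
  | oS c f => forall i : El F c,
      exists s : sel L, sel_ne L s /\ ole (f i) (pick L s)
  end.

Definition olt (a : ord) (L : list ord) : Prop :=
  exists s : sel L, sel_ne L s /\ ole a (pick L s).

Lemma ole_unfold (a : ord) (L : list ord) :
  ole a L <-> forall i : idx a, olt (sub a i) L.
Proof. destruct a; simpl; [split; [intros _ []|auto] | reflexivity]. Qed.

End Ord.

(* Main.v *)
Require Import Defs.
From Stdlib Require Import List.
Import ListNotations.
From Stdlib Require Import Classical.

Section Aux.
Variable F : IndexFamily.
Notation ordF := (ord F).

Definition sp (L M : list ordF) : Prop :=
  M <> [] /\ forall m, In m M -> exists b, In b L /\ exists i : idx b, sub b i = m.

Fixpoint le (a : ordF) (L : list ordF) : Prop :=
  match a with
  | ozero _ => True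
  | oS c f => forall i, exists M, sp L M /\ le (f i) M
  end.

Definition lt (a : ordF) (L : list ordF) : Prop := exists M, sp L M /\ le a M.

Lemma sp_mono L L' M : sp L M -> incl L L' -> sp L' M.
Proof.
  intros [Hn H] Hi; split; auto.
  intros m Hm; destruct (H m Hm) as [b [Hb Hc]]; exists b; auto.
Qed.

Lemma le_mono a : forall L L', le a L -> incl L L' -> le a L'.
Proof.
  induction a as [|c f IH]; simpl; auto.
  intros L L' H Hi i; destruct (H i) as [M [HM HL]].
  exists M; split; [eapply sp_mono; eauto | exact HL].
Qed.

Lemma le_sub y N : le y N -> forall j : idx y, lt (sub y j) N.
Proof. destruct y; simpl; [intros _ []| intros H j; apply H]. Qed.

Lemma le_refl a : forall L, In a L -> le a L.
Proof.
  induction a as [|c f IH]; simpl; auto.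
  intros L HL i; exists [f i]; split.
  - split; [discriminate|]. intros m [<-|[]].
    exists (oS c f); split; auto. exists i; reflexivity.
  - apply IH; simpl; auto.
Qed.

Lemma collect L N : forall P,
  (forall p, In p P -> exists b, In b L /\ exists i : idx b, sub b i = p) ->
  (forall y, In y L -> le y N) ->
  exists Q, (forall q, In q Q -> exists b, In b N /\ exists i : idx b, sub b i = q)
    /\ (P <> [] -> Q <> []) /\ forall p, In p P -> le p Q.
Proof.
  induction P as [|p P IH]; intros HP HL.
  - exists []; repeat split; simpl; tauto.
  - destruct IH as [Q [HQ1 [HQ2 HQ3]]].
    { intros; apply HP; simpl; auto. }
    { exact HL. }
    destruct (HP p (or_introl eq_refl)) as [b [Hb [i Hi]]].
    destruct (@le_sub b N (HL b Hb) i) as [R [[Rn HR] HpR]].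
    rewrite Hi in HpR.
    exists (R ++ Q); split; [|split].
    + intros q Hq; apply in_app_or in Hq; destruct Hq; auto.
    + intros _ E; apply Rn; destruct R; [reflexivity|discriminate].
    + intros x [<-|Hx].
      * eapply le_mono; [exact HpR|]. intros z Hz; apply in_or_app; auto.
      * eapply le_mono; [exact (HQ3 x Hx)|]. intros z Hz; apply in_or_app; auto.
Qed.

Lemma trans x : forall L N, le x L -> (forall y, In y L -> le y N) -> le x N.
Proof.
  induction x as [|c f IH]; simpl; auto.
  intros L N H HN i; destruct (H i) as [M [[Mn HM] HxM]].
  destruct (@collect L N M HM HN) as [Q [HQ1 [HQ2 HQ3]]].
  exists Q; split; [split; auto|].
  eapply IH; eauto.
Qed.

Lemma trans_lt x L N : lt x L -> (forall y, In y L -> le y N) -> lt x N.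
Proof.
  intros [M [[Mn HM] HxM]] HN.
  destruct (@collect L N M HM HN) as [Q [HQ1 [HQ2 HQ3]]].
  exists Q; split; [split; auto|].
  eapply trans; eauto.
Qed.

Lemma lt_le x : forall L, lt x L -> le x L.
Proof.
  induction x as [|c f IH]; simpl; auto.
  intros L [M [HM H]] i.
  exists M; split; auto.
  apply IH. destruct (H i) as [M' [HM' H']]. exists M'; auto.
Qed.

Lemma total a : forall b, le a [b] \/ le b [a].
Proof.
  induction a as [|c f IH]; intros b; [left; simpl; auto|].
  destruct (classic (le (oS c f) [b])) as [H|H]; [left; exact H|right].
  simpl in H. apply not_all_ex_not in H. destruct H as [i Hi].
  destruct b as [|c' g]; simpl; auto.
  intros j. destruct (IH i (g j)) as [H1|H1].
  - exfalso; apply Hi. exists [g j]; split; auto.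
    split; [discriminate|]. intros m [<-|[]].
    exists (oS c' g); split; simpl; auto. exists j; reflexivity.
  - exists [f i]; split; auto.
    split; [discriminate|]. intros m [<-|[]].
    exists (oS c f); split; simpl; auto. exists i; reflexivity.
Qed.

Lemma maxl : forall L, L <> [] -> exists m, In m L /\ forall y, In y L -> le y [m].
Proof.
  induction L as [|a L IH]; intros Hn; [congruence|].
  destruct L as [|b L'].
  - exists a; split; simpl; auto. intros y [<-|[]]; apply le_refl; simpl; auto.
  - destruct IH as [m [Hm Hy]]; [discriminate|].
    destruct (total a m) as [H|H].
    + exists m; split; [simpl in *; tauto|].
      intros y [<-|Hy']; auto.
    + exists a; split; [simpl; auto|].
      intros y [<-|Hy'].
      * apply le_refl; simpl; auto.
      * eapply trans; [exact (Hy y Hy')|]. intros z [<-|[]]; exact H.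
Qed.

Lemma le_one x L : le x L -> L <> [] -> exists m, In m L /\ le x [m].
Proof.
  intros H Hn; destruct (maxl _ Hn) as [m [Hm Hy]].
  exists m; split; auto. eapply trans; eauto.
Qed.

Lemma sub_lt b (j : idx b) : lt (sub b j) [b].
Proof.
  exists [sub b j]; split.
  - split; [discriminate|]. intros m [<-|[]]. exists b; split; simpl; eauto.
  - apply le_refl; simpl; auto.
Qed.

Lemma irrefl b : ~ lt b [b].
Proof.
  induction b as [|c f IH].
  - intros [M [[Mn HM] _]]. destruct M as [|m M]; [congruence|].
    destruct (HM m (or_introl eq_refl)) as [b [[<-|[]] [i _]]]. destruct i.
  - intros [M [[Mn HM] HxM]].
    destruct (le_one _ _ HxM Mn) as [m [Hm Hle]].
    destruct (HM m Hm) as [b [[<-|[]] [i Hi]]]. simpl in Hi. subst m.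
    apply (IH i). eapply trans_lt; [exact (@sub_lt (oS c f) i)|].
    intros y [<-|[]]; exact Hle.
Qed.

Lemma core b gs : lt b (b :: gs) -> lt b gs.
Proof.
  intros [M [[Mn HM] HxM]].
  destruct (le_one _ _ HxM Mn) as [m [Hm Hle]].
  destruct (HM m Hm) as [y [[->|Hy] [i Hi]]].
  - subst m. exfalso. apply (irrefl (sub y i)).
    eapply trans_lt; [exact (@sub_lt y i)|]. intros z [<-|[]]; exact Hle.
  - exists [m]; split; auto. split; [discriminate|].
    intros z [<-|[]]. exists y; split; eauto.
Qed.

Fixpoint sel_nil (L : list ordF) : sel L :=
  match L return sel L with
  | [] => tt
  | b :: L' => ([], sel_nil L')
  end.

Fixpoint sel_union (L : list ordF) : sel L -> sel L -> sel L :=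
  match L return sel L -> sel L -> sel L with
  | [] => fun _ _ => tt
  | b :: L' => fun s1 s2 => (fst s1 ++ fst s2, sel_union L' (snd s1) (snd s2))
  end.

Lemma pick_union (L : list ordF) : forall s1 s2 m,
  In m (pick L s1) \/ In m (pick L s2) -> In m (pick L (sel_union L s1 s2)).
Proof.
  induction L as [|b L IH]; simpl; intros s1 s2 m H; [tauto|].
  rewrite map_app. destruct H as [H|H]; apply in_app_or in H; destruct H as [H|H];
  apply in_or_app.
  - left; apply in_or_app; auto.
  - right; apply IH; auto.
  - left; apply in_or_app; auto.
  - right; apply IH; auto.
Qed.

Lemma pick_sub (L : list ordF) : forall s m, In m (pick L s) -> exists b, In b L /\ exists i : idx b, sub b i = m.
Proof.
  induction L as [|b L IH]; simpl; intros s m H; [tauto|].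
  apply in_app_or in H; destruct H as [H|H].
  - apply in_map_iff in H. destruct H as [i [Hi _]]. exists b; split; eauto.
  - destruct (IH _ _ H) as [b' [Hb' Hi]]. exists b'; split; auto.
Qed.

Lemma pick_ne (L : list ordF) : forall s, sel_ne L s <-> pick L s <> [].
Proof.
  induction L as [|b L IH]; simpl; intros s; [split; [tauto|congruence]|].
  rewrite IH. destruct s as [l s]; simpl. destruct l; simpl.
  - split; [intros [H|H]; [congruence|exact H]|auto].
  - split; [discriminate|intros _; left; discriminate].
Qed.

Lemma pick_single (L : list ordF) : forall b (i : idx b), In b L -> exists s, In (sub b i) (pick L s).
Proof.
  induction L as [|a L IH]; simpl; intros b i H; [tauto|].
  destruct H as [<-|H].
  - exists ([i], sel_nil L); simpl; auto.
  - destruct (IH b i H) as [s Hs]. exists ([], s); simpl; auto.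
Qed.

Lemma sel_exists (L : list ordF) : forall M,
  (forall m, In m M -> exists b, In b L /\ exists i : idx b, sub b i = m) ->
  exists s, incl M (pick L s).
Proof.
  induction M as [|m M IH]; intros H.
  - exists (sel_nil L); intros z [].
  - destruct IH as [s Hs]; [intros; apply H; simpl; auto|].
    destruct (H m (or_introl eq_refl)) as [b [Hb [i Hi]]].
    destruct (@pick_single L b i Hb) as [s1 Hs1].
    exists (sel_union L s1 s). intros z [<-|Hz]; apply pick_union; [left; subst; auto|right; auto].
Qed.

Lemma ole_iff a : forall L, ole a L <-> le a L.
Proof.
  induction a as [|c f IH]; simpl; [tauto|].
  intros L; split; intros H i; destruct (H i) as [X [HX1 HX2]].
  - exists (pick L X); split.
    + split; [apply pick_ne; auto|]. apply pick_sub.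
    + apply IH; auto.
  - destruct HX1 as [Xn HX].
    destruct (@sel_exists L X HX) as [s Hs].
    exists s; split.
    + apply pick_ne. intros E. rewrite E in Hs. destruct X; [congruence|].
      apply (Hs o); simpl; auto.
    + apply IH. eapply le_mono; eauto.
Qed.

Lemma olt_iff a L : olt a L <-> lt a L.
Proof.
  split.
  - intros [s [Hs H]]. exists (pick L s); split.
    + split; [apply pick_ne; auto|]. apply pick_sub.
    + apply ole_iff; auto.
  - intros [X [[Xn HX] H]].
    destruct (@sel_exists L X HX) as [s Hs].
    exists s; split.
    + apply pick_ne. intros E. rewrite E in Hs. destruct X; [congruence|].
      apply (Hs o); simpl; auto.
    + apply ole_iff. eapply le_mono; eauto.
Qed.

End Aux.

Theorem lemma4p12 (F : IndexFamily) (alpha beta : ord F) (gammas : list (ord F))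
  (hr : gammas <> []) :
  (ole alpha [beta] -> olt beta (alpha :: gammas) -> olt beta gammas) /\
  (olt beta [alpha] -> ole alpha (beta :: gammas) -> ole alpha gammas).
Proof.
  split; intros H1 H2.
  - apply ole_iff in H1. apply olt_iff in H2. apply olt_iff.
    apply core. eapply trans_lt; [exact H2|].
    intros y [<-|Hy].
    + eapply le_mono; [exact H1|]. intros z [<-|[]]; simpl; auto.
    + apply le_refl; simpl; auto.
  - apply olt_iff in H1. apply ole_iff in H2. apply ole_iff.
    assert (Hb : lt F beta gammas).
    { apply core. eapply trans_lt; [exact H1|]. intros y [<-|[]]; exact H2. }
    apply lt_le in Hb.
    eapply trans; [exact H2|]. intros y [<-|Hy]; [exact Hb|apply le_refl; auto].
Qed.
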